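(* Let $0\le a\le b$ and let $Q$ be a path linkage with four edges $e_1,e_2,e_3,e_4$ (in this order along the path) of lengths $l(e_1)=\frac{a+b}{2}$ and $l(e_2)=l(e_3)=l(e_4)=\frac{b-a}{6}$. Then $[Q]=[a,b]$ and $\nabla(Q)=[a,b]$.
   Context: A path linkage is a linkage $P=(G,l)$ where $G$ is a path graph with vertices $1,\dots,k+1$ and edges $\{i,i+1\}$; its terminal vertices are $s=1$, $t=k+1$. $C(P)=\{p:V\to\mathbb R^2:|p(u)-p(v)|=l(\{u,v\})\text{ for every edge}\}$, $M(P)$ is the quotient of $C(P)$ by the group of orientation preserving isometries of $\mathbb R^2$, $\theta:M(P)\to\mathbb R$, $\theta(p)=|p(s)-p(t)|$, $[P]=\theta(M(P))$, and $\nabla(P)=\{x\in[P]:\theta^{-1}(x)\text{ is connected}\}$. *)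

(* Defs.v *)
From Stdlib Require Import Reals Lra.
Open Scope R_scope.

Definition point := (R * R)%type.
Definition dist2 (u v : point) : R :=
  sqrt ((fst u - fst v) ^ 2 + (snd u - snd v) ^ 2).

Definition cross (u v w : point) : R :=
  (fst v - fst u) * (snd w - snd u) - (snd v - snd u) * (fst w - fst u).

Definition or_isometry (g : point -> point) : Prop :=
  (forall u v, dist2 (g u) (g v) = dist2 u v) /\
  (forall u v w, cross (g u) (g v) (g w) = cross u v w).

(** A path linkage: path graph on vertices 1..k+1, edges {i,i+1} (1<=i<=k),
    edge {i,i+1} having length [pl_len i]. *)
Record PathLinkage := mkPL { pl_k : nat ; pl_len : nat -> R }.

(** Placements of the vertices (only the values at 1..k+1 are relevant). *)
Definition placement := nat -> point.

Definition config (P : PathLinkage) (p : placement) : Prop :=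
  forall i : nat, (1 <= i <= pl_k P)%nat ->
    dist2 (p i) (p (S i)) = pl_len P i.

(** Equivalence under orientation preserving isometries (the fibres of
    C(P) -> M(P)). *)
Definition equivP (P : PathLinkage) (p q : placement) : Prop :=
  exists g, or_isometry g /\
    forall i : nat, (1 <= i <= S (pl_k P))%nat -> q i = g (p i).

(** Sup-distance of placements on the vertex set V = {1..k+1}
    (the product topology on (R^2)^V). *)
Definition vdist_le (P : PathLinkage) (p q : placement) (e : R) : Prop :=
  forall i : nat, (1 <= i <= S (pl_k P))%nat -> dist2 (p i) (q i) < e.

(** Subsets of M(P) are represented by their preimages in C(P), i.e. by
    saturated subsets of C(P). *)
Definition saturated (P : PathLinkage) (U : placement -> Prop) : Prop :=
  (forall p, U p -> config P p) /\
  (forall p q, U p -> config P q -> equivP P p q -> U q).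

(** Quotient topology on M(P): a subset is open iff its preimage is
    (relatively) open in C(P). *)
Definition openM (P : PathLinkage) (U : placement -> Prop) : Prop :=
  saturated P U /\
  forall p, U p -> exists e, e > 0 /\
    forall q, config P q -> vdist_le P p q e -> U q.

Definition connectedM (P : PathLinkage) (A : placement -> Prop) : Prop :=
  ~ exists U1 U2, openM P U1 /\ openM P U2 /\
      (forall p, A p -> U1 p \/ U2 p) /\
      (exists p, A p /\ U1 p) /\ (exists p, A p /\ U2 p) /\
      (forall p, A p -> U1 p -> U2 p -> False).

(** theta(p) = |p(s) - p(t)|, s = 1, t = k+1 (invariant under isometries). *)
Definition theta (P : PathLinkage) (p : placement) : R :=
  dist2 (p 1%nat) (p (S (pl_k P))).

(** Preimage in C(P) of theta^{-1}(x) subset M(P). *)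
Definition fibre (P : PathLinkage) (x : R) (p : placement) : Prop :=
  config P p /\ theta P p = x.

Definition range (P : PathLinkage) (x : R) : Prop :=
  exists p, config P p /\ theta P p = x.

Definition nabla (P : PathLinkage) (x : R) : Prop :=
  range P x /\ connectedM P (fibre P x).

Definition linkQ (a b : R) : PathLinkage :=
  mkPL 4 (fun i => match i with
                   | 1%nat => (a + b) / 2
                   | _ => (b - a) / 6
                   end).

(* Main.v *)
Require Import Defs.
From Stdlib Require Import Reals Lra Lia Psatz Classical.
Open Scope R_scope.

Definition sqd (u v : point) : R := (fst u - fst v) ^ 2 + (snd u - snd v) ^ 2.

Lemma sqd_nonneg u v : 0 <= sqd u v.
Proof. unfold sqd; apply Rplus_le_le_0_compat; apply pow2_ge_0. Qed.

Lemma dist2_sqd u v : dist2 u v = sqrt (sqd u v).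
Proof. reflexivity. Qed.

Lemma dist2_eq u v l : 0 <= l -> sqd u v = l ^ 2 -> dist2 u v = l.
Proof. intros Hl H. rewrite dist2_sqd, H. apply sqrt_pow2; auto. Qed.

Lemma dist2_sq u v l : dist2 u v = l -> sqd u v = l ^ 2.
Proof. intros H. rewrite dist2_sqd in H. rewrite <- H. rewrite pow2_sqrt; auto. apply sqd_nonneg. Qed.

Lemma dist2_nonneg u v : 0 <= dist2 u v.
Proof. apply sqrt_pos. Qed.

Lemma dist2_sym u v : dist2 u v = dist2 v u.
Proof. unfold dist2. f_equal. ring. Qed.

Lemma dist2_tri u v w : dist2 u w <= dist2 u v + dist2 v w.
Proof.
  destruct u as [u1 u2], v as [v1 v2], w as [w1 w2].
  pose proof (Rgeom.triangle u1 u2 w1 w2 v1 v2) as H.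
  unfold Rgeom.dist_euc, Rsqr in H. unfold dist2; cbn [fst snd].
  replace ((u1 - w1) ^ 2 + (u2 - w2) ^ 2) with ((u1 - w1) * (u1 - w1) + (u2 - w2) * (u2 - w2)) by ring.
  replace ((u1 - v1) ^ 2 + (u2 - v2) ^ 2) with ((u1 - v1) * (u1 - v1) + (u2 - v2) * (u2 - v2)) by ring.
  replace ((v1 - w1) ^ 2 + (v2 - w2) ^ 2) with ((v1 - w1) * (v1 - w1) + (v2 - w2) * (v2 - w2)) by ring.
  exact H.
Qed.

Lemma dist2_zero u v : dist2 u v = 0 -> u = v.
Proof.
  intro H. apply dist2_sq in H. unfold sqd in H. destruct u, v; simpl in *.
  replace (0^2) with 0 in H by ring.
  pose proof (pow2_ge_0 (r-r1)); pose proof (pow2_ge_0 (r0-r2)).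
  assert (E1: (r - r1)^2 = 0) by lra. assert (E2: (r0 - r2)^2 = 0) by lra.
  assert (r - r1 = 0) by nra. assert (r0 - r2 = 0) by nra. f_equal; lra.
Qed.

Lemma dist2_le_abs u v : dist2 u v <= Rabs (fst u - fst v) + Rabs (snd u - snd v).
Proof.
  rewrite dist2_sqd. unfold sqd.
  set (p := fst u - fst v). set (q := snd u - snd v).
  rewrite <- (sqrt_pow2 (Rabs p + Rabs q)) by (pose proof (Rabs_pos p); pose proof (Rabs_pos q); lra).
  apply sqrt_le_1_alt.
  pose proof (Rabs_pos p); pose proof (Rabs_pos q).
  rewrite <- (pow2_abs p), <- (pow2_abs q). nra.
Qed.

Definition mkpl (q1 q2 q3 q4 q5 : point) : placement :=
  fun i => match i with
           | 1%nat => q1 | 2%nat => q2 | 3%nat => q3 | 4%nat => q4 | _ => q5 end.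

Definition Cf (L r : R) (p : placement) : Prop :=
  dist2 (p 1%nat) (p 2%nat) = L /\ dist2 (p 2%nat) (p 3%nat) = r /\
  dist2 (p 3%nat) (p 4%nat) = r /\ dist2 (p 4%nat) (p 5%nat) = r.

Lemma config_iff a b p : config (linkQ a b) p <-> Cf ((a+b)/2) ((b-a)/6) p.
Proof.
  split.
  - intros H. unfold Cf. repeat split.
    + apply (H 1%nat). simpl; lia.
    + apply (H 2%nat). simpl; lia.
    + apply (H 3%nat). simpl; lia.
    + apply (H 4%nat). simpl; lia.
  - intros (H1 & H2 & H3 & H4) i Hi. simpl in Hi.
    destruct i as [|[|[|[|[|i]]]]]; try lia; simpl; assumption.
Qed.

Lemma theta_Q a b p : theta (linkQ a b) p = dist2 (p 1%nat) (p 5%nat).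
Proof. reflexivity. Qed.

Definition link (P : PathLinkage) (A : placement -> Prop) (p q : placement) : Prop :=
  A p /\ A q /\ forall U1 U2, openM P U1 -> openM P U2 ->
    (forall z, A z -> U1 z \/ U2 z) -> (forall z, A z -> U1 z -> U2 z -> False) ->
    (U1 p <-> U1 q).

Lemma link_trans P A p q s : link P A p q -> link P A q s -> link P A p s.
Proof.
  intros (Hp & Hq & H1) (_ & Hs & H2). split; [|split]; auto.
  intros U1 U2 O1 O2 C D. rewrite (H1 U1 U2 O1 O2 C D). apply (H2 U1 U2); auto.
Qed.

Lemma link_sym P A p q : link P A p q -> link P A q p.
Proof.
  intros (Hp & Hq & H1). split; [|split]; auto.
  intros U1 U2 O1 O2 C D. symmetry. apply (H1 U1 U2); auto.
Qed.

Lemma link_oneway P A p q :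
  (forall z, A z -> config P z) -> A p -> A q ->
  (forall U1 U2, openM P U1 -> openM P U2 ->
    (forall z, A z -> U1 z \/ U2 z) -> (forall z, A z -> U1 z -> U2 z -> False) ->
    U1 p -> U1 q) -> link P A p q.
Proof.
  intros HA Hp Hq H. split; [|split]; auto.
  intros U1 U2 O1 O2 C D. split; [apply (H U1 U2); auto|].
  intros Hu1. destruct (C p Hp) as [|Hu2]; auto.
  assert (U2 q).
  { apply (H U2 U1); auto.
    - intros z Az; destruct (C z Az); auto.
    - intros z Az a1 a2; exact (D z Az a2 a1). }
  exfalso; exact (D q Hq Hu1 H0).
Qed.

Lemma link_equiv P A p q :
  (forall z, A z -> config P z) -> A p -> A q -> equivP P p q -> link P A p q.
Proof.
  intros HA Hp Hq He. apply link_oneway; auto.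
  intros U1 U2 [[_ S1] _] _ _ _ Hu. apply (S1 p q); auto.
Qed.

Lemma link_refl P A p : A p -> link P A p p.
Proof. intros H. split; [|split]; auto. intros; tauto. Qed.

Lemma connected_of_link P A c :
  (forall p, A p -> link P A p c) -> connectedM P A.
Proof.
  intros H [U1 [U2 (O1 & O2 & C & [p [Ap Up]] & [q [Aq Uq]] & D)]].
  destruct (H p Ap) as (_ & Ac & H1). destruct (H q Aq) as (_ & _ & H2).
  assert (U1 c) by (apply (H1 U1 U2); auto).
  assert (U2 c).
  { apply (H2 U2 U1); auto.
    - intros z Az; destruct (C z Az); auto.
    - intros z Az a1 a2; exact (D z Az a2 a1). }
  exact (D c Ac H0 H3).
Qed.

Lemma path_link P A (g : R -> placement) :
  (forall z, A z -> config P z) ->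
  (forall t, 0 <= t <= 1 -> A (g t)) ->
  (forall t, 0 <= t <= 1 -> forall e, e > 0 -> exists d, d > 0 /\
      forall t', 0 <= t' <= 1 -> Rabs (t' - t) < d -> vdist_le P (g t) (g t') e) ->
  link P A (g 0) (g 1).
Proof.
  intros HA HgA Hc. apply link_oneway; auto; try (apply HgA; lra).
  intros U1 U2 [_ O1] [_ O2] C D H0.
  set (E := fun t => 0 <= t <= 1 /\ forall t', 0 <= t' <= t -> U1 (g t')).
  assert (HE0 : E 0).
  { split; [lra|]. intros t' Ht'. replace t' with 0 by lra. auto. }
  assert (Hb : bound E). { exists 1. intros t [Ht _]. lra. }
  destruct (completeness E Hb (ex_intro _ 0 HE0)) as [s [Hub Hlub]].
  assert (Hs0 : 0 <= s) by (apply Hub; auto).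
  assert (Hs1 : s <= 1) by (apply Hlub; intros t [Ht _]; lra).
  assert (Hbelow : forall t', 0 <= t' < s -> U1 (g t')).
  { intros t' Ht'.
    destruct (classic (exists t, E t /\ t' < t)) as [[t [[_ Et] Ht]]|Hn].
    - apply Et; lra.
    - exfalso. assert (s <= t'); [|lra]. apply Hlub. intros t Et.
      destruct (Rle_lt_dec t t'); auto. exfalso; apply Hn; eauto. }
  assert (As : A (g s)) by (apply HgA; lra).
  destruct (C _ As) as [Hu|Hu].
  - destruct (O1 _ Hu) as [e [He Ho]].
    destruct (Hc s (conj Hs0 Hs1) e He) as [d [Hd Hcd]].
    assert (Hnear : forall t', 0 <= t' <= 1 -> s <= t' < s + d -> U1 (g t')).
    { intros t' Ht' Hst. apply Ho. apply HA, HgA; auto. apply Hcd; auto.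
      rewrite Rabs_right; lra. }
    destruct (Rle_lt_dec 1 s) as [H1|H1].
    + replace 1 with s by lra. exact Hu.
    + set (t1 := Rmin 1 (s + d/2)).
      assert (E t1).
      { split. unfold t1; apply Rmin_case_strong; intros; lra.
        intros t' Ht'. destruct (Rlt_le_dec t' s).
        - apply Hbelow; lra.
        - apply Hnear; unfold t1 in Ht'; revert Ht'; apply Rmin_case_strong; intros; lra. }
      assert (t1 <= s) by (apply Hub; auto).
      revert H2; unfold t1; apply Rmin_case_strong; intros; lra.
  - destruct (O2 _ Hu) as [e [He Ho]].
    destruct (Hc s (conj Hs0 Hs1) e He) as [d [Hd Hcd]].
    destruct (Req_dec s 0) as [Hz|Hz].
    + exfalso. rewrite Hz in Hu. apply (D (g 0)); auto. apply HgA; lra.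
    + set (t1 := Rmax 0 (s - d/2)).
      assert (Ht1 : 0 <= t1 < s) by (unfold t1; apply Rmax_case_strong; intros; lra).
      exfalso. apply (D (g t1)).
      * apply HgA; lra.
      * apply Hbelow; auto.
      * apply Ho. apply HA, HgA; lra. apply Hcd. lra.
        unfold t1; apply Rmax_case_strong; intros; rewrite Rabs_left1; lra.
Qed.

Definition ccont (F : R -> point) (t : R) : Prop :=
  continuity_pt (fun s => fst (F s)) t /\ continuity_pt (fun s => snd (F s)) t.

Lemma cpt_eps f t : continuity_pt f t -> forall e, e > 0 -> exists d, d > 0 /\
  forall t', Rabs (t' - t) < d -> Rabs (f t' - f t) < e.
Proof.
  intros H e He. destruct (H e He) as [d [Hd Hx]]. exists d. split; auto.
  intros t' Ht'. destruct (Req_dec t t') as [<-|Hne].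
  - unfold Rminus; rewrite Rplus_opp_r, Rabs_R0; auto.
  - apply (Hx t'). split; [split; [exact I|auto]|]. exact Ht'.
Qed.

Lemma ccont_eps F t : ccont F t -> forall e, e > 0 -> exists d, d > 0 /\
  forall t', Rabs (t' - t) < d -> dist2 (F t) (F t') < e.
Proof.
  intros [H1 H2] e He.
  destruct (cpt_eps _ _ H1 (e/2)) as [d1 [Hd1 D1]]; [lra|].
  destruct (cpt_eps _ _ H2 (e/2)) as [d2 [Hd2 D2]]; [lra|].
  exists (Rmin d1 d2). split. apply Rmin_case; lra.
  intros t' Ht'. eapply Rle_lt_trans; [apply dist2_le_abs|].
  rewrite (Rabs_minus_sym (fst (F t))), (Rabs_minus_sym (snd (F t))).
  assert (Rabs (t'-t) < d1) by (eapply Rlt_le_trans; [exact Ht'|apply Rmin_l]).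
  assert (Rabs (t'-t) < d2) by (eapply Rlt_le_trans; [exact Ht'|apply Rmin_r]).
  specialize (D1 t' H). specialize (D2 t' H0). lra.
Qed.

Lemma mkpl_link a b A (F1 F2 F3 F4 F5 : R -> point) :
  (forall z, A z -> config (linkQ a b) z) ->
  (forall t, 0 <= t <= 1 -> A (mkpl (F1 t) (F2 t) (F3 t) (F4 t) (F5 t))) ->
  (forall t, 0 <= t <= 1 -> ccont F1 t /\ ccont F2 t /\ ccont F3 t /\ ccont F4 t /\ ccont F5 t) ->
  link (linkQ a b) A (mkpl (F1 0) (F2 0) (F3 0) (F4 0) (F5 0))
                     (mkpl (F1 1) (F2 1) (F3 1) (F4 1) (F5 1)).
Proof.
  intros HA HF HC.
  apply (path_link _ A (fun t => mkpl (F1 t) (F2 t) (F3 t) (F4 t) (F5 t))); auto.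
  intros t Ht e He. destruct (HC t Ht) as (C1 & C2 & C3 & C4 & C5).
  destruct (ccont_eps _ _ C1 e He) as [d1 [P1 E1]].
  destruct (ccont_eps _ _ C2 e He) as [d2 [P2 E2]].
  destruct (ccont_eps _ _ C3 e He) as [d3 [P3 E3]].
  destruct (ccont_eps _ _ C4 e He) as [d4 [P4 E4]].
  destruct (ccont_eps _ _ C5 e He) as [d5 [P5 E5]].
  exists (Rmin d1 (Rmin d2 (Rmin d3 (Rmin d4 d5)))). split.
  { repeat (apply Rmin_case; try lra). }
  intros t' _ Ht' i Hi. simpl in Hi.
  pose proof (Rmin_l d1 (Rmin d2 (Rmin d3 (Rmin d4 d5)))).
  pose proof (Rmin_r d1 (Rmin d2 (Rmin d3 (Rmin d4 d5)))).
  pose proof (Rmin_l d2 (Rmin d3 (Rmin d4 d5))).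
  pose proof (Rmin_r d2 (Rmin d3 (Rmin d4 d5))).
  pose proof (Rmin_l d3 (Rmin d4 d5)). pose proof (Rmin_r d3 (Rmin d4 d5)).
  pose proof (Rmin_l d4 d5). pose proof (Rmin_r d4 d5).
  destruct i as [|[|[|[|[|[|i]]]]]]; try lia; simpl.
  - apply E1; lra.
  - apply E2; lra.
  - apply E3; lra.
  - apply E4; lra.
  - apply E5; lra.
Qed.

Lemma cp_const c t : continuity_pt (fun _ => c) t.
Proof. apply continuity_pt_const. intros x y; reflexivity. Qed.
Lemma cp_id t : continuity_pt (fun s => s) t.
Proof. apply derivable_continuous_pt, derivable_pt_id. Qed.
Lemma cp_plus f g t : continuity_pt f t -> continuity_pt g t -> continuity_pt (fun s => f s + g s) t.
Proof. intros; apply (continuity_pt_plus f g); auto. Qed.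
Lemma cp_minus f g t : continuity_pt f t -> continuity_pt g t -> continuity_pt (fun s => f s - g s) t.
Proof. intros; apply (continuity_pt_minus f g); auto. Qed.
Lemma cp_mult f g t : continuity_pt f t -> continuity_pt g t -> continuity_pt (fun s => f s * g s) t.
Proof. intros; apply (continuity_pt_mult f g); auto. Qed.
Lemma cp_opp f t : continuity_pt f t -> continuity_pt (fun s => - f s) t.
Proof. intros; apply (continuity_pt_opp f); auto. Qed.
Lemma cp_pow2 f t : continuity_pt f t -> continuity_pt (fun s => f s ^ 2) t.
Proof. intros. apply (continuity_pt_locally_ext (fun s => f s * f s) _ 1). lra. intros; ring. apply cp_mult; auto. Qed.
Lemma cp_inv f t : continuity_pt f t -> f t <> 0 -> continuity_pt (fun s => / f s) t.
Proof. intros; apply (continuity_pt_inv f); auto. Qed.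
Lemma cp_div f g t : continuity_pt f t -> continuity_pt g t -> g t <> 0 -> continuity_pt (fun s => f s / g s) t.
Proof. intros; apply (continuity_pt_div f g); auto. Qed.
Lemma cp_cos f t : continuity_pt f t -> continuity_pt (fun s => cos (f s)) t.
Proof. intros; apply (continuity_pt_comp f cos); auto. apply continuity_cos. Qed.
Lemma cp_sin f t : continuity_pt f t -> continuity_pt (fun s => sin (f s)) t.
Proof. intros; apply (continuity_pt_comp f sin); auto. apply continuity_sin. Qed.
Lemma cp_sqrt f t : continuity_pt f t -> 0 <= f t -> continuity_pt (fun s => sqrt (f s)) t.
Proof. intros; apply (continuity_pt_comp f sqrt); auto. apply continuity_pt_sqrt; auto. Qed.

Ltac cont := repeat first
  [ apply cp_const | apply cp_id | apply cp_plus | apply cp_minus | apply cp_mult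
  | apply cp_opp | apply cp_pow2 | apply cp_cos | apply cp_sin ].

Definition FB (L r x : R) (p : placement) : Prop := Cf L r p /\ dist2 (p 1%nat) (p 5%nat) = x.

Lemma fibre_iff a b x p : fibre (linkQ a b) x p <-> FB ((a+b)/2) ((b-a)/6) x p.
Proof. unfold fibre, FB. rewrite config_iff, theta_Q. tauto. Qed.

Definition giso (A e : point) (z : point) : point :=
  (fst e * (fst z - fst A) + snd e * (snd z - snd A),
   - snd e * (fst z - fst A) + fst e * (snd z - snd A)).

Lemma giso_sqd A e u v : fst e ^ 2 + snd e ^ 2 = 1 -> sqd (giso A e u) (giso A e v) = sqd u v.
Proof.
  intros H. unfold sqd, giso; cbn [fst snd].
  transitivity ((fst e ^ 2 + snd e ^ 2) * ((fst u - fst v) ^ 2 + (snd u - snd v) ^ 2)); [ring|].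
  rewrite H; ring.
Qed.

Lemma giso_iso A e : fst e ^ 2 + snd e ^ 2 = 1 -> or_isometry (giso A e).
Proof.
  intros H. split.
  - intros u v. rewrite !dist2_sqd, giso_sqd; auto.
  - intros u v w. unfold cross, giso; cbn [fst snd].
    transitivity ((fst e ^ 2 + snd e ^ 2) * ((fst v - fst u) * (snd w - snd u) - (snd v - snd u) * (fst w - fst u))); [ring|].
    rewrite H; ring.
Qed.

Lemma giso_dist A e u v : fst e ^ 2 + snd e ^ 2 = 1 -> dist2 (giso A e u) (giso A e v) = dist2 u v.
Proof. intros H; rewrite !dist2_sqd, giso_sqd; auto. Qed.

Lemma FB_iso L r x A e p : fst e ^ 2 + snd e ^ 2 = 1 -> FB L r x p -> FB L r x (fun i => giso A e (p i)).
Proof.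
  intros H [(H1 & H2 & H3 & H4) H5]. unfold FB, Cf. rewrite !giso_dist; auto.
Qed.

Lemma equiv_iso P A e p : fst e ^ 2 + snd e ^ 2 = 1 -> equivP P p (fun i => giso A e (p i)).
Proof. intros H. exists (giso A e). split; [apply giso_iso; auto|]. intros; reflexivity. Qed.

Definition P1f (L x : R) (w : point) (sg : R) : point :=
  let n := fst w ^ 2 + snd w ^ 2 in
  let K := L ^ 2 - x ^ 2 in
  let G := 4 * L ^ 2 * n - (K + n) ^ 2 in
  let c := (K + n) / (2 * n) in
  let k := sg * sqrt G / (2 * n) in
  (c * fst w - k * snd w, c * snd w + k * fst w).

Definition nrm (w : point) := fst w ^ 2 + snd w ^ 2.

Lemma G_fact L x n : 4 * L ^ 2 * n - (L ^ 2 - x ^ 2 + n) ^ 2 = (n - (L - x) ^ 2) * ((L + x) ^ 2 - n).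
Proof. ring. Qed.

Lemma P1f_fib L x w sg : sg ^ 2 = 1 -> nrm w > 0 -> (L - x) ^ 2 <= nrm w <= (L + x) ^ 2 ->
  0 <= L -> 0 <= x ->
  sqd (P1f L x w sg) (0,0) = L ^ 2 /\ sqd (P1f L x w sg) w = x ^ 2.
Proof.
  unfold nrm. destruct w as [w1 w2]; cbn [fst snd]. intros Hsg Hn [Hl Hu] HL Hx.
  set (n := w1 ^ 2 + w2 ^ 2) in *.
  set (G := 4 * L ^ 2 * n - (L ^ 2 - x ^ 2 + n) ^ 2).
  assert (HG : 0 <= G) by (unfold G; rewrite G_fact; apply Rmult_le_pos; lra).
  pose proof (pow2_sqrt G HG) as HS. set (S := sqrt G) in *.
  unfold P1f, sqd; cbn [fst snd]. fold n. fold G. fold S.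
  assert (n <> 0) by lra.
  split.
  - transitivity (((L ^ 2 - x ^ 2 + n) ^ 2 + sg ^ 2 * S ^ 2) / (4 * n ^ 2) * n).
    { unfold n; field. fold n. auto. }
    rewrite Hsg, HS. unfold G. field. auto.
  - transitivity (((L ^ 2 - x ^ 2 - n) ^ 2 + sg ^ 2 * S ^ 2) / (4 * n ^ 2) * n).
    { unfold n; field. fold n. auto. }
    rewrite Hsg, HS. unfold G. field. auto.
Qed.

Lemma sqrt_pow2_abs z : sqrt (z ^ 2) = Rabs z.
Proof. rewrite <- Rsqr_pow2. apply sqrt_Rsqr_abs. Qed.

Lemma P1f_decomp L x q w : nrm w > 0 -> sqd q (0,0) = L ^ 2 -> sqd q w = x ^ 2 ->
  q = P1f L x w 1 \/ q = P1f L x w (-1).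
Proof.
  unfold nrm. destruct w as [w1 w2], q as [q1 q2]; unfold sqd; cbn [fst snd].
  intros Hn H1 H2.
  set (n := w1 ^ 2 + w2 ^ 2) in *.
  set (dw := q1 * w1 + q2 * w2). set (dj := - q1 * w2 + q2 * w1).
  assert (Hdw : dw = (L ^ 2 - x ^ 2 + n) / 2).
  { unfold dw, n. replace (q1 - 0) with q1 in H1 by ring. replace (q2 - 0) with q2 in H1 by ring.
    lra. }
  assert (HG : 4 * L ^ 2 * n - (L ^ 2 - x ^ 2 + n) ^ 2 = (2 * dj) ^ 2).
  { replace (L ^ 2 - x ^ 2 + n) with (2 * dw) by lra.
    replace (L ^ 2) with (q1 ^ 2 + q2 ^ 2) by (rewrite <- H1; ring).
    unfold dw, dj, n. ring. }
  assert (Hq : n * q1 = dw * w1 - dj * w2 /\ n * q2 = dw * w2 + dj * w1)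
    by (unfold n, dw, dj; split; ring).
  assert (n <> 0) by lra.
  unfold P1f; cbn [fst snd]. fold n. rewrite HG.
  rewrite (sqrt_pow2_abs (2 * dj)).
  replace (L ^ 2 - x ^ 2 + n) with (2 * dw) by lra.
  destruct Hq as [Hq1 Hq2].
  destruct (Rle_lt_dec 0 dj) as [Hd|Hd].
  - left. rewrite Rabs_right by lra. f_equal.
    + apply (Rmult_eq_reg_l n); auto. rewrite Hq1. field; auto.
    + apply (Rmult_eq_reg_l n); auto. rewrite Hq2. field; auto.
  - right. rewrite Rabs_left by lra. f_equal.
    + apply (Rmult_eq_reg_l n); auto. rewrite Hq1. field; auto.
    + apply (Rmult_eq_reg_l n); auto. rewrite Hq2. field; auto.
Qed.

Definition wpt (r : R) (u2 u3 : point) : point :=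
  (r + r * fst u2 + r * fst u3, r * snd u2 + r * snd u3).

Definition CA (L x r sg : R) (u2 u3 : point) : placement :=
  mkpl (P1f L x (wpt r u2 u3) sg) (0,0) (r,0) (r + r * fst u2, r * snd u2) (wpt r u2 u3).

Definition unit (u : point) := fst u ^ 2 + snd u ^ 2 = 1.

Lemma wpt_le r u2 u3 : unit u2 -> unit u3 -> nrm (wpt r u2 u3) <= 9 * r ^ 2.
Proof.
  unfold unit, nrm, wpt. destruct u2 as [c2 s2], u3 as [c3 s3]; cbn [fst snd]. intros H2 H3.
  assert (c2 <= 1) by nra. assert (c3 <= 1) by nra.
  assert (0 <= (c2-c3)^2 + (s2-s3)^2) by (apply Rplus_le_le_0_compat; apply pow2_ge_0).
  assert (c2 * c3 + s2 * s3 <= 1) by nra.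
  assert (E : (r + r * c2 + r * c3) ^ 2 + (r * s2 + r * s3) ^ 2 =
    r ^ 2 * (1 + (c2^2+s2^2) + (c3^2+s3^2) + 2 * c2 + 2 * c3 + 2 * (c2 * c3 + s2 * s3))) by ring.
  rewrite E, H2, H3. assert (0 <= r ^ 2) by apply pow2_ge_0. nra.
Qed.

Lemma CA_fib L x r sg u2 u3 : 0 <= r -> 3 * r <= L -> 0 <= x -> sg ^ 2 = 1 ->
  unit u2 -> unit u3 -> nrm (wpt r u2 u3) > 0 -> (L - x) ^ 2 <= nrm (wpt r u2 u3) ->
  FB L r x (CA L x r sg u2 u3).
Proof.
  intros Hr HL Hx Hsg U2 U3 Hn Hm.
  pose proof (wpt_le r u2 u3 U2 U3).
  destruct (P1f_fib L x (wpt r u2 u3) sg) as [E1 E2]; auto; try lra.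
  { split; auto. nra. }
  unfold FB, Cf, CA, mkpl. repeat split.
  - apply dist2_eq; [lra|]. exact E1.
  - apply dist2_eq; auto. unfold sqd; cbn [fst snd]; ring.
  - apply dist2_eq; auto. unfold sqd; cbn [fst snd]. unfold unit in U2.
    replace (r - (r + r * fst u2)) with (- r * fst u2) by ring.
    replace (0 - r * snd u2) with (- r * snd u2) by ring.
    transitivity (r ^ 2 * (fst u2 ^ 2 + snd u2 ^ 2)); [ring|]. rewrite U2; ring.
  - apply dist2_eq; auto. unfold sqd, wpt; cbn [fst snd]. unfold unit in U3.
    transitivity (r ^ 2 * (fst u3 ^ 2 + snd u3 ^ 2)); [ring|]. rewrite U3; ring.
  - apply dist2_eq; [auto|exact E2].
Qed.

Definition e (t : R) : point := (cos t, sin t).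

Lemma e_unit t : unit (e t).
Proof. unfold unit, e; cbn [fst snd]. pose proof (sin2_cos2 t). unfold Rsqr in H. nra. Qed.

Lemma angle_of u : unit u -> exists p, - PI <= p <= PI /\ u = e p.
Proof.
  destruct u as [c s]; unfold unit, e; cbn [fst snd]. intros H.
  assert (Hc : -1 <= c <= 1) by nra.
  pose proof (acos_bound c). pose proof (cos_acos c Hc). pose proof (sin_acos c Hc).
  assert (Hs : sqrt (1 - c²) = Rabs s).
  { rewrite <- sqrt_Rsqr_abs. f_equal. unfold Rsqr; nra. }
  destruct (Rle_lt_dec 0 s).
  - exists (acos c). split; [lra|]. f_equal; auto. rewrite H2, Hs, Rabs_right; lra.
  - exists (- acos c). split; [lra|]. rewrite cos_neg, sin_neg. f_equal; auto.
    rewrite H2, Hs, Rabs_left; lra.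
Qed.

Lemma nrm_uv r u v : unit u -> unit v ->
  nrm (wpt r u v) = r ^ 2 * (3 + 2 * fst u + 2 * fst v + 2 * (fst u * fst v + snd u * snd v)).
Proof.
  unfold unit, nrm, wpt; cbn [fst snd]. intros Hu Hv.
  transitivity (r ^ 2 * (1 + (fst u ^ 2 + snd u ^ 2) + (fst v ^ 2 + snd v ^ 2) + 2 * fst u + 2 * fst v
     + 2 * (fst u * fst v + snd u * snd v))); [ring|]. rewrite Hu, Hv. ring.
Qed.

Lemma nrm_hy r h y : nrm (wpt r (e (2 * h)) (e (h + y))) = r ^ 2 * (1 + 4 * cos h ^ 2 + 4 * cos h * cos y).
Proof.
  rewrite nrm_uv by apply e_unit. unfold e; cbn [fst snd].
  rewrite <- cos_minus. replace (2 * h - (h + y)) with (h - y) by ring.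
  rewrite cos_2a_cos, cos_plus, cos_minus. ring.
Qed.

Lemma cos_abs z : cos (Rabs z) = cos z.
Proof. destruct (Rle_lt_dec 0 z). rewrite Rabs_right; lra. rewrite Rabs_left, cos_neg; lra. Qed.

Lemma cos_mono a b : Rabs a <= Rabs b -> Rabs b <= PI -> cos b <= cos a.
Proof.
  intros H1 H2. rewrite <- (cos_abs a), <- (cos_abs b).
  destruct (Req_dec (Rabs a) (Rabs b)) as [E|E]. rewrite E; lra.
  left. apply cos_decreasing_1; try lra; apply Rabs_pos.
Qed.

Ltac cont2 := repeat first
  [ apply cp_const | apply cp_id | apply cp_plus | apply cp_minus | apply cp_mult
  | apply cp_opp | apply cp_pow2 | apply cp_cos | apply cp_sin | apply cp_div
  | apply cp_inv | apply cp_sqrt | assumption ].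

Lemma P1f_ccont L x sg (w1 w2 : R -> R) t : continuity_pt w1 t -> continuity_pt w2 t ->
  w1 t ^ 2 + w2 t ^ 2 > 0 ->
  0 <= 4 * L ^ 2 * (w1 t ^ 2 + w2 t ^ 2) - (L ^ 2 - x ^ 2 + (w1 t ^ 2 + w2 t ^ 2)) ^ 2 ->
  ccont (fun s => P1f L x (w1 s, w2 s) sg) t.
Proof.
  intros C1 C2 Hn HG. unfold ccont, P1f; cbn [fst snd]. split; cont2; lra.
Qed.

Lemma CA_ccont L x r sg (al be : R -> R) t : continuity_pt al t -> continuity_pt be t ->
  nrm (wpt r (e (al t)) (e (be t))) > 0 ->
  (L - x) ^ 2 <= nrm (wpt r (e (al t)) (e (be t))) <= (L + x) ^ 2 ->
  ccont (fun s => P1f L x (wpt r (e (al s)) (e (be s))) sg) t /\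
  ccont (fun s => ((0,0) : point)) t /\ ccont (fun s => ((r,0) : point)) t /\
  ccont (fun s => ((r + r * fst (e (al s)), r * snd (e (al s))) : point)) t /\
  ccont (fun s => wpt r (e (al s)) (e (be s))) t.
Proof.
  intros Ca Cb Hn Hm.
  split; [|split; [|split; [|split]]].
  - apply (P1f_ccont L x sg (fun s => r + r * cos (al s) + r * cos (be s))
                           (fun s => r * sin (al s) + r * sin (be s))).
    + cont2.
    + cont2.
    + exact Hn.
    + rewrite G_fact. unfold nrm, wpt, e in Hm; cbn [fst snd] in Hm. apply Rmult_le_pos; lra.
  - split; cbn [fst snd]; apply cp_const.
  - split; cbn [fst snd]; apply cp_const.
  - unfold e; split; cbn [fst snd]; cont2.
  - unfold wpt, e; split; cbn [fst snd]; cont2.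
Qed.

Definition Lq (a b : R) := (a + b) / 2.
Definition rq (a b : R) := (b - a) / 6.

Lemma fibre_iff' a b x p : fibre (linkQ a b) x p <-> FB (Lq a b) (rq a b) x p.
Proof. apply fibre_iff. Qed.

Lemma fib_config a b x z : fibre (linkQ a b) x z -> config (linkQ a b) z.
Proof. intros [H _]; exact H. Qed.

Lemma params a b x : 0 <= a <= b -> a <= x <= b ->
  0 <= rq a b /\ 3 * rq a b <= Lq a b /\ 0 <= x /\ (Lq a b - x) ^ 2 <= 9 * rq a b ^ 2 /\
  9 * rq a b ^ 2 <= (Lq a b + x) ^ 2.
Proof.
  unfold Lq, rq. intros H1 H2. repeat split; try lra.
  - assert (Rabs ((a+b)/2 - x) <= 3 * ((b-a)/6)) by (apply Rabs_le; lra).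
    rewrite <- (pow2_abs ((a+b)/2 - x)). assert (0 <= Rabs ((a+b)/2 - x)) by apply Rabs_pos. nra.
  - nra.
Qed.

Lemma CA_path a b x sg (al be : R -> R) : 0 <= a <= b -> a <= x <= b -> sg ^ 2 = 1 ->
  (forall t, continuity_pt al t) -> (forall t, continuity_pt be t) ->
  (forall t, 0 <= t <= 1 -> nrm (wpt (rq a b) (e (al t)) (e (be t))) > 0 /\
                            (Lq a b - x) ^ 2 <= nrm (wpt (rq a b) (e (al t)) (e (be t)))) ->
  link (linkQ a b) (fibre (linkQ a b) x)
    (CA (Lq a b) x (rq a b) sg (e (al 0)) (e (be 0)))
    (CA (Lq a b) x (rq a b) sg (e (al 1)) (e (be 1))).
Proof.
  intros Hab Hx Hsg Ca Cb Hn.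
  destruct (params a b x Hab Hx) as (P1 & P2 & P3 & P4 & P5).
  apply (mkpl_link a b (fibre (linkQ a b) x)
    (fun s => P1f (Lq a b) x (wpt (rq a b) (e (al s)) (e (be s))) sg)
    (fun s => ((0,0) : point)) (fun s => ((rq a b,0) : point))
    (fun s => ((rq a b + rq a b * fst (e (al s)), rq a b * snd (e (al s))) : point))
    (fun s => wpt (rq a b) (e (al s)) (e (be s)))).
  - apply fib_config.
  - intros t Ht. apply fibre_iff'. destruct (Hn t Ht).
    apply CA_fib; auto; apply e_unit.
  - intros t Ht. destruct (Hn t Ht). pose proof (wpt_le (rq a b) _ _ (e_unit (al t)) (e_unit (be t))).
    apply CA_ccont; auto. lra.
Qed.

Lemma abs_le_b z c : Rabs z <= c -> - c <= z <= c.
Proof. unfold Rabs; destruct (Rcase_abs z); intros; lra. Qed.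

Definition CAhy a b x sg h y := CA (Lq a b) x (rq a b) sg (e (2 * h)) (e (h + y)).

Lemma Mono a b x sg h y : 0 <= a <= b -> a <= x <= b -> sg ^ 2 = 1 ->
  Rabs h <= PI / 2 -> Rabs y <= PI ->
  nrm (wpt (rq a b) (e (2 * h)) (e (h + y))) > 0 ->
  (Lq a b - x) ^ 2 <= nrm (wpt (rq a b) (e (2 * h)) (e (h + y))) ->
  link (linkQ a b) (fibre (linkQ a b) x) (CAhy a b x sg h y) (CAhy a b x sg 0 0).
Proof.
  intros Hab Hx Hsg Hh Hy Hn Hm. unfold CAhy.
  rewrite nrm_hy in Hn, Hm.
  assert (Hch : 0 <= cos h) by (apply cos_ge_0; apply abs_le_b in Hh; lra).
  assert (PI2 : PI / 2 <= PI) by (pose proof PI_RGT_0; lra).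
  apply link_trans with (CA (Lq a b) x (rq a b) sg (e (2 * h)) (e (h + 0))).
  - pose proof (CA_path a b x sg (fun _ => 2 * h) (fun t => h + (1 - t) * y) Hab Hx Hsg) as H.
    cbn beta in H. replace (h + (1 - 0) * y) with (h + y) in H by ring.
    replace (h + (1 - 1) * y) with (h + 0) in H by ring.
    apply H.
    + intros; apply cp_const.
    + intros; cont.
    + intros t Ht. rewrite nrm_hy.
      assert (cos y <= cos ((1 - t) * y)).
      { apply cos_mono; auto. rewrite Rabs_mult. rewrite (Rabs_right (1-t)) by lra.
        pose proof (Rabs_pos y). nra. }
      assert (0 <= rq a b ^ 2) by apply pow2_ge_0.
      assert (Hd : 0 <= rq a b ^ 2 * (4 * cos h * (cos ((1-t)*y) - cos y)))
        by (apply Rmult_le_pos; [auto| apply Rmult_le_pos; lra]).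
      match goal with |- ?A > 0 /\ _ <= ?A => 
        assert (E : A = rq a b ^ 2 * (1 + 4 * cos h ^ 2 + 4 * cos h * cos y)
                    + rq a b ^ 2 * (4 * cos h * (cos ((1-t)*y) - cos y))) by ring end.
      rewrite E. split; lra.
  - pose proof (CA_path a b x sg (fun t => 2 * ((1 - t) * h)) (fun t => (1 - t) * h + 0) Hab Hx Hsg) as H.
    cbn beta in H. replace ((1 - 0) * h) with h in H by ring.
    replace ((1 - 1) * h) with 0 in H by ring.
    apply H.
    + intros; cont.
    + intros; cont.
    + intros t Ht. rewrite nrm_hy. rewrite cos_0 in *.
      assert (cos h <= cos ((1 - t) * h)).
      { apply cos_mono; try lra. rewrite Rabs_mult. rewrite (Rabs_right (1-t)) by lra.
        pose proof (Rabs_pos h). nra. }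
      assert (0 <= rq a b ^ 2) by apply pow2_ge_0.
      rewrite Rmult_1_r in *.
      assert (Hd : 0 <= rq a b ^ 2 * (4 * (cos ((1-t)*h) - cos h) * (1 + cos ((1-t)*h) + cos h)))
        by (apply Rmult_le_pos; [auto| apply Rmult_le_pos; lra]).
      assert (cos y <= 1) by apply COS_bound.
      assert (Hd2 : 0 <= rq a b ^ 2 * (4 * cos h * (1 - cos y)))
        by (apply Rmult_le_pos; [auto| apply Rmult_le_pos; lra]).
      match goal with |- ?A > 0 /\ _ <= ?A => 
        assert (E : A = rq a b ^ 2 * (1 + 4 * cos h ^ 2 + 4 * cos h * cos y)
                    + rq a b ^ 2 * (4 * cos h * (1 - cos y))
                    + rq a b ^ 2 * (4 * (cos ((1-t)*h) - cos h) * (1 + cos ((1-t)*h) + cos h))) by ring end.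
      rewrite E. split; lra.
Qed.

Lemma link_agree a b x p q : fibre (linkQ a b) x p -> fibre (linkQ a b) x q ->
  (forall i, (1 <= i <= 5)%nat -> q i = p i) -> link (linkQ a b) (fibre (linkQ a b) x) p q.
Proof.
  intros Hp Hq H. apply link_equiv; auto. apply fib_config.
  exists (fun z => z). split.
  - split; intros; reflexivity.
  - intros i Hi. apply H. simpl in Hi. lia.
Qed.

Lemma e_shift z : e (z + 2 * PI) = e z /\ e (z - 2 * PI) = e z.
Proof.
  unfold e. split; f_equal.
  - rewrite cos_plus, cos_2PI, sin_2PI; ring.
  - rewrite sin_plus, cos_2PI, sin_2PI; ring.
  - rewrite cos_minus, cos_2PI, sin_2PI; ring.
  - rewrite sin_minus, cos_2PI, sin_2PI; ring.
Qed.

Lemma hy_of u2 u3 : unit u2 -> unit u3 -> exists h y, Rabs h <= PI / 2 /\ Rabs y <= PI /\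
  u2 = e (2 * h) /\ u3 = e (h + y).
Proof.
  intros U2 U3. destruct (angle_of u2 U2) as [p2 [B2 E2]]. destruct (angle_of u3 U3) as [p3 [B3 E3]].
  exists (p2 / 2).
  assert (Hh : Rabs (p2/2) <= PI / 2) by (apply Rabs_le; lra).
  assert (E2' : u2 = e (2 * (p2 / 2))) by (rewrite E2; f_equal; field).
  destruct (Rlt_le_dec PI (p3 - p2/2)).
  - exists (p3 - p2/2 - 2 * PI). repeat split; auto.
    + apply Rabs_le; lra.
    + rewrite E3. replace (p2 / 2 + (p3 - p2 / 2 - 2 * PI)) with (p3 - 2 * PI) by ring.
      symmetry; apply e_shift.
  - destruct (Rlt_le_dec (p3 - p2/2) (- PI)).
    + exists (p3 - p2/2 + 2 * PI). repeat split; auto.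
      * apply Rabs_le; lra.
      * rewrite E3. replace (p2 / 2 + (p3 - p2 / 2 + 2 * PI)) with (p3 + 2 * PI) by ring.
        symmetry; apply e_shift.
    + exists (p3 - p2/2). repeat split; auto.
      * apply Rabs_le; lra.
      * rewrite E3. f_equal; ring.
Qed.

Lemma sqd_0 w : sqd w (0,0) = nrm w.
Proof. unfold sqd, nrm; cbn [fst snd]; ring. Qed.

Definition sgn_ok (sg : R) := sg = 1 \/ sg = -1.

Lemma sgn_sq sg : sgn_ok sg -> sg ^ 2 = 1.
Proof. intros [-> | ->]; ring. Qed.

Lemma normal_case a b x q : 0 <= a <= b -> a <= x <= b -> 0 < rq a b ->
  fibre (linkQ a b) x q -> q 2%nat = (0,0) -> q 3%nat = (rq a b, 0) -> nrm (q 5%nat) > 0 ->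
  exists sg, sgn_ok sg /\ link (linkQ a b) (fibre (linkQ a b) x) q (CAhy a b x sg 0 0).
Proof.
  intros Hab Hx Hr Hq E2 E3 Hn.
  destruct (params a b x Hab Hx) as (P1 & P2 & P3 & P4 & P5).
  pose proof Hq as Hq'. apply fibre_iff' in Hq'. destruct Hq' as [(D12 & D23 & D34 & D45) D15].
  set (r := rq a b) in *. set (L := Lq a b) in *.
  set (q4 := q 4%nat) in *. set (q5 := q 5%nat) in *. set (q1 := q 1%nat) in *.
  set (u2 := ((fst q4 - r) / r, snd q4 / r)).
  set (u3 := ((fst q5 - fst q4) / r, (snd q5 - snd q4) / r)).
  assert (Hr0 : r <> 0) by lra.
  assert (U2 : unit u2).
  { apply dist2_sq in D34. rewrite E3 in D34. unfold sqd in D34; cbn [fst snd] in D34.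
    unfold unit, u2; cbn [fst snd].
    transitivity (((r - fst q4)^2 + (0 - snd q4)^2) / r^2); [field; auto|].
    rewrite D34; field; auto. }
  assert (U3 : unit u3).
  { apply dist2_sq in D45. unfold sqd in D45.
    unfold unit, u3; cbn [fst snd].
    transitivity (((fst q4 - fst q5)^2 + (snd q4 - snd q5)^2) / r^2); [field; auto|].
    rewrite D45; field; auto. }
  assert (Q4 : q4 = (r + r * fst u2, r * snd u2)).
  { unfold u2; cbn [fst snd]. destruct q4 as [a4 b4]; cbn [fst snd]. f_equal; field; auto. }
  assert (Q5 : q5 = wpt r u2 u3).
  { unfold wpt, u2, u3; cbn [fst snd]. destruct q5 as [a5 b5]; destruct q4 as [a4 b4]; cbn [fst snd].
    f_equal; field; auto. }
  assert (Hd : dist2 q5 (0,0) = sqrt (nrm q5)) by (rewrite dist2_sqd, sqd_0; auto).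
  assert (Hm : (L - x) ^ 2 <= nrm q5).
  { pose proof (dist2_tri q1 q5 (q 2%nat)). pose proof (dist2_tri q1 (q 2%nat) q5).
    rewrite E2 in *. rewrite (dist2_sym (0,0) q5) in *. rewrite Hd in *.
    pose proof (sqrt_pos (nrm q5)). pose proof (pow2_sqrt (nrm q5)).
    assert (0 <= nrm q5) by lra.
    assert (Rabs (L - x) <= sqrt (nrm q5)) by (apply Rabs_le; lra).
    rewrite <- (pow2_abs (L - x)).
    replace (nrm q5) with (sqrt (nrm q5) ^ 2) by (apply pow2_sqrt; auto).
    apply pow_incr; split; auto. apply Rabs_pos. }
  assert (S1 : sqd q1 (0,0) = L ^ 2) by (apply dist2_sq; rewrite <- E2; exact D12).
  assert (S2 : sqd q1 q5 = x ^ 2) by (apply dist2_sq; exact D15).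
  assert (Hdec : exists sg, sgn_ok sg /\ q1 = P1f L x q5 sg).
  { destruct (P1f_decomp L x q1 q5 Hn S1 S2); [exists 1|exists (-1)]; split; auto; unfold sgn_ok; lra. }
  destruct Hdec as [sg [Hsg Q1]]. exists sg. split; auto.
  destruct (hy_of u2 u3 U2 U3) as [h [y (Hh & Hy & Eh & Ey)]].
  assert (Hca : link (linkQ a b) (fibre (linkQ a b) x) q (CA L x r sg u2 u3)).
  { apply link_agree; auto.
    - apply fibre_iff'. apply CA_fib; auto. apply sgn_sq; auto. rewrite <- Q5; auto. rewrite <- Q5; auto.
    - intros i Hi. destruct i as [|[|[|[|[|[|i]]]]]]; try lia; unfold CA, mkpl.
      + rewrite <- Q5. symmetry; exact Q1.
      + symmetry; exact E2.
      + symmetry; exact E3.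
      + symmetry; exact Q4.
      + symmetry; exact Q5. }
  eapply link_trans; [exact Hca|].
  rewrite Eh, Ey. fold (CAhy a b x sg h y).
  rewrite Eh, Ey in Q5. rewrite Q5 in Hn, Hm.
  apply Mono; auto. apply sgn_sq; auto.
Qed.

Lemma P1f_G0 L x w sg sg' : nrm w = (L - x) ^ 2 -> P1f L x w sg = P1f L x w sg'.
Proof.
  unfold nrm; intros H. unfold P1f; cbn zeta.
  replace (4 * L ^ 2 * (fst w ^ 2 + snd w ^ 2) - (L ^ 2 - x ^ 2 + (fst w ^ 2 + snd w ^ 2)) ^ 2) with 0
    by (rewrite G_fact, H; ring).
  rewrite sqrt_0. f_equal; unfold Rdiv; ring.
Qed.

Lemma acos_half c : 0 <= c <= 1 -> Rabs (acos c) <= PI / 2 /\ cos (acos c) = c.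
Proof.
  intros Hc. pose proof (acos_bound c). assert (E : cos (acos c) = c) by (apply cos_acos; lra).
  split; auto. rewrite Rabs_right by lra.
  destruct (Rle_lt_dec (acos c) (PI/2)); auto.
  exfalso. assert (cos (acos c) < cos (PI/2)) by (apply cos_decreasing_1; lra).
  rewrite cos_PI2 in H0. lra.
Qed.

Lemma flip_gen a b x h y : 0 <= a <= b -> a <= x <= b -> 0 < rq a b ->
  Rabs h <= PI / 2 -> Rabs y <= PI ->
  nrm (wpt (rq a b) (e (2 * h)) (e (h + y))) = (Lq a b - x) ^ 2 -> 0 < (Lq a b - x) ^ 2 ->
  link (linkQ a b) (fibre (linkQ a b) x) (CAhy a b x 1 0 0) (CAhy a b x (-1) 0 0).
Proof.
  intros Hab Hx Hr Hh Hy Hn Hp.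
  apply link_trans with (CAhy a b x 1 h y).
  - apply link_sym. apply Mono; auto; try ring; lra.
  - replace (CAhy a b x 1 h y) with (CAhy a b x (-1) h y).
    + apply Mono; auto; try ring; lra.
    + unfold CAhy, CA. rewrite (P1f_G0 _ _ _ (-1) 1 Hn). reflexivity.
Qed.

Definition Bp1 (L r h : R) : point :=
  let w := wpt r (e (2 * h)) (e (h + PI)) in
  let S := sqrt (L ^ 2 - nrm w / 4) in
  (fst w / 2 - S * sin h, snd w / 2 + S * cos h).

Definition Bpt (L r h : R) : placement :=
  mkpl (Bp1 L r h) (0,0) (r,0) (r + r * fst (e (2 * h)), r * snd (e (2 * h)))
       (wpt r (e (2 * h)) (e (h + PI))).

Lemma w_B r h : wpt r (e (2 * h)) (e (h + PI)) = (r * cos h * (2 * cos h - 1), r * sin h * (2 * cos h - 1)).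
Proof.
  unfold wpt, e; cbn [fst snd]. rewrite cos_2a_cos, sin_2a, neg_cos, neg_sin. f_equal; ring.
Qed.

Lemma nrm_B r h : nrm (wpt r (e (2 * h)) (e (h + PI))) = r ^ 2 * (2 * cos h - 1) ^ 2.
Proof.
  rewrite w_B. unfold nrm; cbn [fst snd]. pose proof (sin2_cos2 h). unfold Rsqr in H.
  transitivity (r ^ 2 * (2 * cos h - 1) ^ 2 * (sin h * sin h + cos h * cos h)); [ring|]. rewrite H; ring.
Qed.

Lemma B_fib a b h : 0 <= a <= b -> 0 <= h <= PI / 2 ->
  FB (Lq a b) (rq a b) (Lq a b) (Bpt (Lq a b) (rq a b) h).
Proof.
  intros Hab Hh. destruct (params a b (Lq a b) Hab) as (P1 & P2 & P3 & P4 & P5); [unfold Lq; lra|].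
  set (L := Lq a b) in *. set (r := rq a b) in *.
  assert (Hc : 0 <= cos h <= 1) by (split; [apply cos_ge_0; lra | apply COS_bound]).
  assert (Hn : nrm (wpt r (e (2 * h)) (e (h + PI))) <= r ^ 2).
  { rewrite nrm_B. assert ((2 * cos h - 1) ^ 2 <= 1) by nra. assert (0 <= r^2) by apply pow2_ge_0. nra. }
  assert (HS : 0 <= L ^ 2 - nrm (wpt r (e (2 * h)) (e (h + PI))) / 4) by nra.
  pose proof (pow2_sqrt _ HS) as ES.
  assert (Hw := w_B r h).
  assert (N : nrm (wpt r (e (2 * h)) (e (h + PI))) = (r * cos h * (2 * cos h - 1)) ^ 2 + (r * sin h * (2 * cos h - 1)) ^ 2)
    by (rewrite Hw; reflexivity).
  pose proof (sin2_cos2 h) as SC. unfold Rsqr in SC.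
  unfold FB, Cf, Bpt, mkpl. repeat split.
  - apply dist2_eq; [lra|]. unfold Bp1; cbn zeta.
    set (S := sqrt (L ^ 2 - nrm (wpt r (e (2 * h)) (e (h + PI))) / 4)) in *.
    rewrite N in ES. rewrite Hw. unfold sqd; cbn [fst snd].
    transitivity (((r * cos h * (2 * cos h - 1)) ^ 2 + (r * sin h * (2 * cos h - 1)) ^ 2) / 4
                  + S ^ 2 * (sin h * sin h + cos h * cos h)); [field|].
    rewrite SC, ES. field.
  - apply dist2_eq; auto. unfold sqd; cbn [fst snd]; ring.
  - apply dist2_eq; auto. unfold sqd; cbn [fst snd]. pose proof (e_unit (2 * h)) as U. unfold unit in U.
    transitivity (r ^ 2 * (fst (e (2 * h)) ^ 2 + snd (e (2 * h)) ^ 2)); [ring|]. rewrite U; ring.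
  - apply dist2_eq; auto. unfold sqd, wpt; cbn [fst snd]. pose proof (e_unit (h + PI)) as U. unfold unit in U.
    transitivity (r ^ 2 * (fst (e (h + PI)) ^ 2 + snd (e (h + PI)) ^ 2)); [ring|]. rewrite U; ring.
  - apply dist2_eq; [unfold L; unfold Lq; lra|]. unfold Bp1; cbn zeta.
    set (S := sqrt (L ^ 2 - nrm (wpt r (e (2 * h)) (e (h + PI))) / 4)) in *.
    rewrite N in ES. rewrite Hw. unfold sqd; cbn [fst snd].
    transitivity (((r * cos h * (2 * cos h - 1)) ^ 2 + (r * sin h * (2 * cos h - 1)) ^ 2) / 4
                  + S ^ 2 * (sin h * sin h + cos h * cos h)); [field|].
    rewrite SC, ES. field.
Qed.

Lemma sqrt_fact c u : 0 <= c -> 0 <= u -> sqrt (c ^ 2 * u) = c * sqrt u.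
Proof. intros. rewrite sqrt_mult; try nra. rewrite sqrt_pow2; auto. Qed.

Lemma B_end0 L r : 0 < r -> 3 * r <= L ->
  Bp1 L r 0 = P1f L L (wpt r (e (2 * 0)) (e (0 + PI))) 1.
Proof.
  intros Hr HL. unfold Bp1; cbn zeta. rewrite w_B, cos_0, sin_0.
  unfold P1f, nrm; cbn [fst snd].
  replace (r * 1 * (2 * 1 - 1)) with r by ring. replace (r * 0 * (2 * 1 - 1)) with 0 by ring.
  replace (4 * L ^ 2 * (r ^ 2 + 0 ^ 2) - (L ^ 2 - L ^ 2 + (r ^ 2 + 0 ^ 2)) ^ 2)
    with ((2 * r) ^ 2 * (L ^ 2 - (r ^ 2 + 0 ^ 2) / 4)) by field.
  rewrite sqrt_fact by nra. f_equal; field; lra.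
Qed.

Lemma B_end1 L r : 0 < r -> 3 * r <= L ->
  Bp1 L r (PI / 2) = P1f L L (wpt r (e (2 * (PI / 2))) (e (PI / 2 + PI))) (-1).
Proof.
  intros Hr HL. unfold Bp1; cbn zeta. rewrite w_B, cos_PI2, sin_PI2.
  unfold P1f, nrm; cbn [fst snd].
  replace (r * 0 * (2 * 0 - 1)) with 0 by ring. replace (r * 1 * (2 * 0 - 1)) with (- r) by ring.
  replace (4 * L ^ 2 * (0 ^ 2 + (- r) ^ 2) - (L ^ 2 - L ^ 2 + (0 ^ 2 + (- r) ^ 2)) ^ 2)
    with ((2 * r) ^ 2 * (L ^ 2 - (0 ^ 2 + (- r) ^ 2) / 4)) by field.
  rewrite sqrt_fact by nra. f_equal; field; lra.
Qed.

Lemma B_S a b h : 0 <= a <= b -> 0 <= h <= PI / 2 ->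
  0 <= Lq a b ^ 2 - nrm (wpt (rq a b) (e (2 * h)) (e (h + PI))) / 4.
Proof.
  intros Hab Hh. destruct (params a b (Lq a b) Hab) as (P1 & P2 & P3 & P4 & P5); [unfold Lq; lra|].
  assert (Hc : 0 <= cos h <= 1) by (split; [apply cos_ge_0; lra | apply COS_bound]).
  rewrite nrm_B. assert ((2 * cos h - 1) ^ 2 <= 1) by nra. assert (0 <= rq a b ^2) by apply pow2_ge_0.
  nra.
Qed.

Lemma B_link a b : 0 <= a <= b -> 0 < rq a b ->
  link (linkQ a b) (fibre (linkQ a b) (Lq a b)) (Bpt (Lq a b) (rq a b) 0) (Bpt (Lq a b) (rq a b) (PI / 2)).
Proof.
  intros Hab Hr.
  pose proof PI_RGT_0.
  assert (HH : link (linkQ a b) (fibre (linkQ a b) (Lq a b)) (Bpt (Lq a b) (rq a b) (0 * (PI / 2)))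
     (Bpt (Lq a b) (rq a b) (1 * (PI / 2)))).
  { apply (mkpl_link a b (fibre (linkQ a b) (Lq a b))
    (fun t => Bp1 (Lq a b) (rq a b) (t * (PI / 2)))
    (fun s => ((0,0) : point)) (fun s => ((rq a b,0) : point))
    (fun t => ((rq a b + rq a b * fst (e (2 * (t * (PI / 2)))), rq a b * snd (e (2 * (t * (PI / 2))))) : point))
    (fun t => wpt (rq a b) (e (2 * (t * (PI / 2)))) (e (t * (PI / 2) + PI)))).
    - apply fib_config.
    - intros t Ht. apply fibre_iff'. apply B_fib; auto. nra.
    - intros t Ht. assert (HS := B_S a b (t * (PI / 2)) Hab ltac:(nra)).
      unfold Bp1, ccont, wpt, e, nrm in *; cbn [fst snd] in *.
      repeat split; cont2. }
  replace (0 * (PI / 2)) with 0 in HH by ring. replace (1 * (PI / 2)) with (PI / 2) in HH by ring.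
  exact HH.
Qed.

Lemma flip a b x : 0 <= a <= b -> a <= x <= b -> 0 < rq a b ->
  link (linkQ a b) (fibre (linkQ a b) x) (CAhy a b x 1 0 0) (CAhy a b x (-1) 0 0).
Proof.
  intros Hab Hx Hr. destruct (params a b x Hab Hx) as (P1 & P2 & P3 & P4 & P5).
  set (m := Rabs (Lq a b - x)).
  assert (Hm2 : (Lq a b - x) ^ 2 = m ^ 2) by (unfold m; rewrite pow2_abs; auto).
  assert (Hm3 : m <= 3 * rq a b) by (unfold m, Lq, rq in *; apply Rabs_le; lra).
  assert (Hm0 : 0 <= m) by apply Rabs_pos.
  destruct (Req_dec m 0) as [Z|NZ].
  -
    assert (Ex : x = Lq a b) by (unfold m in Z; destruct (Req_dec x (Lq a b)); auto;
                                  exfalso; apply Rabs_no_R0 in Z; auto; lra).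
    subst x.
    apply link_trans with (CAhy a b (Lq a b) 1 0 PI).
    { apply link_sym. apply Mono; auto; try ring; try lra.
      - rewrite Rabs_R0; pose proof PI_RGT_0; lra.
      - rewrite Rabs_right; pose proof PI_RGT_0; lra.
      - rewrite nrm_hy, cos_0, cos_PI. nra.
      - rewrite nrm_hy, cos_0, cos_PI. replace (Lq a b - Lq a b) with 0 by ring. nra. }
    apply link_trans with (Bpt (Lq a b) (rq a b) 0).
    { apply link_agree.
      - apply fibre_iff'. unfold CAhy. apply CA_fib; auto; try ring; try apply e_unit.
        rewrite nrm_hy, cos_0, cos_PI. nra.
        rewrite nrm_hy, cos_0, cos_PI. replace (Lq a b - Lq a b) with 0 by ring. nra.
      - apply fibre_iff'. apply B_fib; auto. pose proof PI_RGT_0; lra.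
      - intros i Hi. destruct i as [|[|[|[|[|[|i]]]]]]; try lia; unfold CAhy, CA, Bpt, mkpl; auto.
        apply B_end0; auto. }
    apply link_trans with (Bpt (Lq a b) (rq a b) (PI / 2)).
    { apply B_link; auto. }
    apply link_trans with (CAhy a b (Lq a b) (-1) (PI / 2) PI).
    { apply link_agree.
      - apply fibre_iff'. apply B_fib; auto. pose proof PI_RGT_0; lra.
      - apply fibre_iff'. unfold CAhy. apply CA_fib; auto; try ring; try apply e_unit.
        rewrite nrm_hy, cos_PI2, cos_PI. nra.
        rewrite nrm_hy, cos_PI2, cos_PI. replace (Lq a b - Lq a b) with 0 by ring. nra.
      - intros i Hi. destruct i as [|[|[|[|[|[|i]]]]]]; try lia; unfold CAhy, CA, Bpt, mkpl; auto.
        symmetry; apply B_end1; auto. }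
    apply Mono; auto; try ring; try lra.
    + rewrite Rabs_right; pose proof PI_RGT_0; lra.
    + rewrite Rabs_right; pose proof PI_RGT_0; lra.
    + rewrite nrm_hy, cos_PI2, cos_PI. nra.
    + rewrite nrm_hy, cos_PI2, cos_PI. replace (Lq a b - Lq a b) with 0 by ring. nra.
  - assert (Hmp : 0 < m) by lra.
    destruct (Rle_lt_dec (rq a b) m).
    + set (c := (m / rq a b - 1) / 2).
      assert (Hc : 0 <= c <= 1).
      { unfold c; split; apply Rmult_le_reg_l with (2 * rq a b); try lra; field_simplify; try lra. }
      destruct (acos_half c Hc) as [Hh Hcos].
      apply (flip_gen a b x (acos c) 0); auto.
      * rewrite Rabs_R0; pose proof PI_RGT_0; lra.
      * rewrite nrm_hy, Hcos, cos_0, Hm2. unfold c. field. lra.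
      * rewrite Hm2; nra.
    + set (c := (1 + m / rq a b) / 2).
      assert (Hc : 0 <= c <= 1).
      { unfold c; split; apply Rmult_le_reg_l with (2 * rq a b); try lra; field_simplify; try lra. }
      destruct (acos_half c Hc) as [Hh Hcos].
      apply (flip_gen a b x (acos c) PI); auto.
      * rewrite Rabs_right; pose proof PI_RGT_0; lra.
      * rewrite nrm_hy, Hcos, cos_PI, Hm2. unfold c. field. lra.
      * rewrite Hm2; nra.
Qed.

Definition Rf (P Q : point) : point :=
  let ux := fst Q - fst P in let uy := snd Q - snd P in
  let nu := ux ^ 2 + uy ^ 2 in
  let mu := - (fst P * ux + snd P * uy) / nu in
  (2 * (fst P + mu * ux), 2 * (snd P + mu * uy)).

Lemma Rf_props P Q : sqd Q P > 0 ->
  sqd (Rf P Q) P = nrm P /\ sqd (Rf P Q) Q = nrm Q.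
Proof.
  destruct P as [p1 p2], Q as [q1 q2]. unfold sqd, nrm, Rf; cbn [fst snd]. intros H.
  assert ((q1 - p1) ^ 2 + (q2 - p2) ^ 2 <> 0) by lra.
  split; field; auto.
Qed.

Lemma sqd_pos_of A B r L : nrm A = r ^ 2 -> nrm B = L ^ 2 -> 0 < r -> r < L -> sqd A B > 0.
Proof.
  destruct A as [a1 a2], B as [b1 b2]; unfold nrm, sqd; cbn [fst snd]. intros HA HB Hr HL.
  assert (I : (a1 * b1 + a2 * b2) ^ 2 + (a1 * b2 - a2 * b1) ^ 2 = (a1^2 + a2^2) * (b1^2 + b2^2)) by ring.
  rewrite HA, HB in I.
  assert (0 <= (a1 * b2 - a2 * b1) ^ 2) by apply pow2_ge_0.
  assert (a1 * b1 + a2 * b2 <= r * L).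
  { set (d := a1 * b1 + a2 * b2) in *. destruct (Rle_lt_dec d (r * L)); auto. exfalso.
    assert (0 < r * L) by nra.
    assert ((r * L) * (r * L) < d * d) by (apply Rmult_le_0_lt_compat; lra).
    assert (r ^ 2 * L ^ 2 = (r * L) * (r * L)) by ring. assert (d ^ 2 = d * d) by ring. lra. }
  assert (E : (a1 - b1) ^ 2 + (a2 - b2) ^ 2 = (a1^2+a2^2) + (b1^2+b2^2) - 2 * (a1 * b1 + a2 * b2)) by ring.
  rewrite E, HA, HB. nra.
Qed.

Lemma Rf_dot P Q : sqd Q P > 0 ->
  fst (Rf P Q) * fst Q + snd (Rf P Q) * snd Q =
  2 * ((fst P * fst Q + snd P * snd Q) +
       (nrm P - (fst P * fst Q + snd P * snd Q)) * (nrm Q - (fst P * fst Q + snd P * snd Q)) / sqd Q P).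
Proof.
  destruct P as [p1 p2], Q as [q1 q2]. unfold sqd, nrm, Rf; cbn [fst snd]. intros H.
  assert ((q1 - p1) ^ 2 + (q2 - p2) ^ 2 <> 0) by lra.
  field; auto.
Qed.

Lemma Rf_nz P Q : fst P * fst Q + snd P * snd Q = 0 -> nrm P > 0 -> nrm Q > 0 -> nrm (Rf P Q) > 0.
Proof.
  intros Hd HP HQ.
  assert (HS : sqd Q P = nrm P + nrm Q).
  { destruct P, Q; unfold sqd, nrm in *; cbn [fst snd] in *. nra. }
  assert (Hpos : sqd Q P > 0) by lra.
  pose proof (Rf_dot P Q Hpos) as D. rewrite Hd in D.
  assert (0 < nrm P * nrm Q / sqd Q P) by (apply Rdiv_lt_0_compat; nra).
  assert (Hdot : fst (Rf P Q) * fst Q + snd (Rf P Q) * snd Q > 0).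
  { rewrite D. replace ((nrm P - 0) * (nrm Q - 0) / sqd Q P) with (nrm P * nrm Q / sqd Q P) by (field; lra). lra. }
  destruct (Rf P Q) as [r1 r2]; unfold nrm in *; cbn [fst snd] in *.
  destruct (Req_dec r1 0); destruct (Req_dec r2 0); subst; try nra.
Qed.

Lemma sqd_0' w : sqd (0,0) w = nrm w.
Proof. unfold sqd, nrm; cbn [fst snd]; ring. Qed.

Lemma zero_case a b x q : 0 <= a <= b -> a <= x <= b -> 0 < rq a b ->
  fibre (linkQ a b) x q -> q 2%nat = (0,0) -> q 3%nat = (rq a b, 0) -> q 5%nat = (0,0) ->
  exists Y, fibre (linkQ a b) x Y /\ Y 2%nat = (0,0) /\ Y 3%nat = (rq a b, 0) /\
    nrm (Y 5%nat) > 0 /\ link (linkQ a b) (fibre (linkQ a b) x) q Y.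
Proof.
  intros Hab Hx Hr Hq E2 E3 E5.
  destruct (params a b x Hab Hx) as (P1 & P2 & P3 & P4 & P5).
  pose proof Hq as Hq'. apply fibre_iff' in Hq'. destruct Hq' as [(D12 & D23 & D34 & D45) D15].
  rewrite E2 in D12. rewrite E5 in D15, D45. rewrite E3 in D34.
  assert (Ex : x = Lq a b) by (rewrite <- D15, <- D12; auto). clear D15. subst x.
  set (r := rq a b) in *. set (L := Lq a b) in *.
  set (q4 := q 4%nat) in *. set (q1 := q 1%nat) in *.
  assert (HL : 0 < L) by lra.
  assert (N1 : nrm q1 = L ^ 2) by (rewrite <- sqd_0; apply dist2_sq; auto).
  assert (N4 : nrm q4 = r ^ 2) by (rewrite <- sqd_0; apply dist2_sq; auto).
  assert (S34 : sqd (r, 0) q4 = r ^ 2) by (apply dist2_sq; auto).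
  assert (U1 : unit (fst q1 / L, snd q1 / L)).
  { unfold unit, nrm in *; cbn [fst snd]. field_simplify; [|lra]. rewrite N1. field. lra. }
  assert (U4 : unit (- fst q4 / r, - snd q4 / r)).
  { unfold unit, nrm in *; cbn [fst snd]. field_simplify; [|lra].
    replace (fst q4 ^ 2 + snd q4 ^ 2) with (r ^ 2) by auto. field. lra. }
  destruct (angle_of _ U1) as [f0 [_ F0]]. destruct (angle_of _ U4) as [fs [_ Fs]].
  unfold e in F0, Fs. injection F0 as F0a F0b. injection Fs as Fsa Fsb.
  set (A := fibre (linkQ a b) L).
  assert (FIB : forall P1 P5 : point, nrm P1 = L ^ 2 -> sqd P5 P1 = L ^ 2 -> sqd P5 q4 = r ^ 2 ->
      A (mkpl P1 (0,0) (r,0) q4 P5)).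
  { intros Q1 Q5 H1 H2 H3. apply fibre_iff'. change (FB L r L (mkpl Q1 (0,0) (r,0) q4 Q5)).
    unfold FB, Cf, mkpl. repeat split.
    - apply dist2_eq; [lra|]. rewrite sqd_0; auto.
    - apply dist2_eq; [lra|]. unfold sqd; cbn [fst snd]; ring.
    - apply dist2_eq; [lra|]. auto.
    - apply dist2_eq; [lra|]. unfold sqd in *; rewrite <- H3; ring.
    - apply dist2_eq; [lra|]. unfold sqd in *; rewrite <- H2; ring. }
  assert (NE : forall t, nrm (L * cos t, L * sin t) = L ^ 2).
  { intros t. unfold nrm; cbn [fst snd]. pose proof (sin2_cos2 t). unfold Rsqr in H.
    transitivity (L ^ 2 * (sin t * sin t + cos t * cos t)); [ring|]. rewrite H; ring. }
  assert (Ph1 : link (linkQ a b) A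
     (mkpl (L * cos (f0 + 0 * (fs - f0)), L * sin (f0 + 0 * (fs - f0))) (0,0) (r,0) q4 (0,0))
     (mkpl (L * cos (f0 + 1 * (fs - f0)), L * sin (f0 + 1 * (fs - f0))) (0,0) (r,0) q4 (0,0))).
  { apply (mkpl_link a b A (fun t => (L * cos (f0 + t * (fs - f0)), L * sin (f0 + t * (fs - f0))))
      (fun _ => (0,0)) (fun _ => (r,0)) (fun _ => q4) (fun _ => (0,0))).
    - apply fib_config.
    - intros t Ht. apply FIB.
      + apply NE.
      + rewrite sqd_0'. apply NE.
      + rewrite sqd_0'. exact N4.
    - intros t Ht. unfold ccont; cbn [fst snd]. repeat split; cont. }
  assert (PQ : forall t, sqd q4 (L * cos t, L * sin t) > 0).
  { intros t. apply (sqd_pos_of _ _ r L); auto. lra. }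
  assert (Ph2 : link (linkQ a b) A
     (mkpl (L * cos (fs + 0 * (PI/2)), L * sin (fs + 0 * (PI/2))) (0,0) (r,0) q4
           (Rf (L * cos (fs + 0 * (PI/2)), L * sin (fs + 0 * (PI/2))) q4))
     (mkpl (L * cos (fs + 1 * (PI/2)), L * sin (fs + 1 * (PI/2))) (0,0) (r,0) q4
           (Rf (L * cos (fs + 1 * (PI/2)), L * sin (fs + 1 * (PI/2))) q4))).
  { apply (mkpl_link a b A (fun t => (L * cos (fs + t * (PI/2)), L * sin (fs + t * (PI/2))))
      (fun _ => (0,0)) (fun _ => (r,0)) (fun _ => q4)
      (fun t => Rf (L * cos (fs + t * (PI/2)), L * sin (fs + t * (PI/2))) q4)).
    - apply fib_config.
    - intros t Ht. destruct (Rf_props (L * cos (fs + t * (PI/2)), L * sin (fs + t * (PI/2))) q4 (PQ _)).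
      apply FIB; auto. rewrite H; apply NE. rewrite H0; auto.
    - intros t Ht. pose proof (PQ (fs + t * (PI / 2))) as HP.
      unfold ccont, Rf, sqd in *; cbn [fst snd] in *. repeat split; cont2; lra. }
  exists (mkpl (L * cos (fs + 1 * (PI/2)), L * sin (fs + 1 * (PI/2))) (0,0) (r,0) q4
           (Rf (L * cos (fs + 1 * (PI/2)), L * sin (fs + 1 * (PI/2))) q4)).
  pose proof Ph2 as Ph2'. destruct Ph2 as (A2s & A2e & _).
  split; [exact A2e|]. split; [reflexivity|]. split; [reflexivity|]. split.
  - cbn. apply Rf_nz.
    + cbn [fst snd]. replace (fs + 1 * (PI / 2)) with (fs + PI / 2) by ring.
      rewrite cos_plus, sin_plus, cos_PI2, sin_PI2.
      assert (E4a : fst q4 = - r * cos fs) by (rewrite <- Fsa; field; lra).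
      assert (E4b : snd q4 = - r * sin fs) by (rewrite <- Fsb; field; lra).
      rewrite E4a, E4b. ring.
    + rewrite NE. nra.
    + rewrite N4. nra.
  - apply link_trans with (mkpl (L * cos (f0 + 0 * (fs - f0)), L * sin (f0 + 0 * (fs - f0))) (0,0) (r,0) q4 (0,0)).
    { destruct Ph1 as (A1s & _). apply link_agree; auto.
      intros i Hi. destruct i as [|[|[|[|[|[|i]]]]]]; try lia; cbn; auto.
      replace (f0 + 0 * (fs - f0)) with f0 by ring. rewrite <- F0a, <- F0b.
      apply injective_projections; cbn [fst snd]; fold q1; field; lra. }
    eapply link_trans; [exact Ph1|].
    eapply link_trans; [|exact Ph2'].
    destruct Ph1 as (_ & A1e & _).
    apply link_agree; auto.
    intros i Hi. destruct i as [|[|[|[|[|[|i]]]]]]; try lia; cbn; auto.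
    + replace (fs + 0 * (PI / 2)) with (f0 + 1 * (fs - f0)) by ring. reflexivity.
    + replace (fs + 0 * (PI / 2)) with fs by ring.
      assert (E4a : fst q4 = - r * cos fs) by (rewrite <- Fsa; field; lra).
      assert (E4b : snd q4 = - r * sin fs) by (rewrite <- Fsb; field; lra).
      unfold Rf; cbn [fst snd]. rewrite E4a, E4b.
      pose proof (sin2_cos2 fs) as SC. unfold Rsqr in SC.
      assert (Hn : (- r * cos fs - L * cos fs) ^ 2 + (- r * sin fs - L * sin fs) ^ 2 = (r + L) ^ 2).
      { transitivity ((r + L) ^ 2 * (sin fs * sin fs + cos fs * cos fs)); [ring|]. rewrite SC; ring. }
      rewrite Hn.
      assert (Hm : - (L * cos fs * (- r * cos fs - L * cos fs) + L * sin fs * (- r * sin fs - L * sin fs))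
                   = L * (r + L)).
      { transitivity (L * (r + L) * (sin fs * sin fs + cos fs * cos fs)); [ring|]. rewrite SC; ring. }
      rewrite Hm. f_equal; field; lra.
Qed.

Lemma K_fib a b x sg : 0 <= a <= b -> a <= x <= b -> 0 < rq a b -> sgn_ok sg ->
  fibre (linkQ a b) x (CAhy a b x sg 0 0).
Proof.
  intros Hab Hx Hr Hs. destruct (params a b x Hab Hx) as (P1 & P2 & P3 & P4 & P5).
  apply fibre_iff'. unfold CAhy. apply CA_fib; auto; try apply e_unit; try apply sgn_sq; auto;
  rewrite nrm_hy, cos_0; nra.
Qed.

Lemma main_link a b x p : 0 <= a <= b -> a <= x <= b -> 0 < rq a b ->
  fibre (linkQ a b) x p -> link (linkQ a b) (fibre (linkQ a b) x) p (CAhy a b x 1 0 0).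
Proof.
  intros Hab Hx Hr Hp.
  pose proof Hp as Hp'. apply fibre_iff' in Hp'. destruct Hp' as [(D12 & D23 & D34 & D45) D15].
  set (r := rq a b) in *.
  set (p2 := p 2%nat) in *. set (p3 := p 3%nat) in *.
  set (ev := ((fst p3 - fst p2) / r, (snd p3 - snd p2) / r)).
  assert (Hr0 : r <> 0) by lra.
  assert (S23 : sqd p2 p3 = r ^ 2) by (apply dist2_sq; auto).
  assert (Ue : fst ev ^ 2 + snd ev ^ 2 = 1).
  { unfold ev; cbn [fst snd]. unfold sqd in S23.
    transitivity (((fst p2 - fst p3) ^ 2 + (snd p2 - snd p3) ^ 2) / r ^ 2); [field; auto|].
    rewrite S23; field; auto. }
  set (q := fun i => giso p2 ev (p i)).
  assert (Hq : fibre (linkQ a b) x q) by (apply fibre_iff'; apply FB_iso; auto; apply fibre_iff'; auto).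
  assert (L1 : link (linkQ a b) (fibre (linkQ a b) x) p q).
  { apply link_equiv; auto. apply fib_config. apply equiv_iso; auto. }
  assert (Q2 : q 2%nat = (0,0)).
  { unfold q, giso; fold p2. f_equal; ring. }
  assert (Q3 : q 3%nat = (r,0)).
  { unfold q, giso; fold p3. unfold ev; cbn [fst snd]. unfold sqd in S23.
    f_equal.
    - transitivity (((fst p2 - fst p3) ^ 2 + (snd p2 - snd p3) ^ 2) / r); [field; auto|].
      rewrite S23; field; auto.
    - field; auto. }
  assert (Hfin : forall Y, fibre (linkQ a b) x Y -> Y 2%nat = (0,0) -> Y 3%nat = (r,0) -> nrm (Y 5%nat) > 0 ->
     link (linkQ a b) (fibre (linkQ a b) x) Y (CAhy a b x 1 0 0)).
  { intros Y HY Y2 Y3 Yn. destruct (normal_case a b x Y Hab Hx Hr HY Y2 Y3 Yn) as [sg [[-> | ->] HL]]; auto.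
    eapply link_trans; [exact HL|]. apply link_sym. apply flip; auto. }
  eapply link_trans; [exact L1|].
  assert (Hn0 : 0 <= nrm (q 5%nat)) by (unfold nrm; apply Rplus_le_le_0_compat; apply pow2_ge_0).
  destruct (Req_dec (nrm (q 5%nat)) 0) as [Z|NZ].
  - assert (Q5 : q 5%nat = (0,0)).
    { destruct (q 5%nat) as [c1 c2] eqn:E; unfold nrm in Z; cbn [fst snd] in Z.
      assert (c1 = 0) by nra. assert (c2 = 0) by nra. subst; auto. }
    destruct (zero_case a b x q Hab Hx Hr Hq Q2 Q3 Q5) as [Y (HY & Y2 & Y3 & Yn & LY)].
    eapply link_trans; [exact LY|]. apply Hfin; auto.
  - apply Hfin; auto. lra.
Qed.

Lemma range_bounds a b x p : 0 <= a <= b -> config (linkQ a b) p -> theta (linkQ a b) p = x -> a <= x <= b.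
Proof.
  intros Hab Hc Ht. apply config_iff in Hc. rewrite theta_Q in Ht.
  destruct Hc as (D12 & D23 & D34 & D45).
  pose proof (dist2_tri (p 1%nat) (p 2%nat) (p 5%nat)).
  pose proof (dist2_tri (p 2%nat) (p 3%nat) (p 5%nat)).
  pose proof (dist2_tri (p 3%nat) (p 4%nat) (p 5%nat)).
  pose proof (dist2_tri (p 1%nat) (p 5%nat) (p 2%nat)).
  pose proof (dist2_tri (p 5%nat) (p 4%nat) (p 2%nat)).
  pose proof (dist2_tri (p 4%nat) (p 3%nat) (p 2%nat)).
  rewrite (dist2_sym (p 5%nat) (p 4%nat)) in *.
  rewrite (dist2_sym (p 4%nat) (p 3%nat)) in *.
  rewrite (dist2_sym (p 3%nat) (p 2%nat)) in *.
  rewrite (dist2_sym (p 5%nat) (p 2%nat)) in *.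
  rewrite (dist2_sym (p 4%nat) (p 2%nat)) in *.
  lra.
Qed.

Definition Cz (L : R) : placement := mkpl (0,0) (L,0) (L,0) (L,0) (L,0).

Lemma r0_case a b x : 0 <= a <= b -> a <= x <= b -> rq a b = 0 ->
  x = Lq a b /\ fibre (linkQ a b) x (Cz (Lq a b)) /\
  forall p, fibre (linkQ a b) x p -> equivP (linkQ a b) p (Cz (Lq a b)).
Proof.
  intros Hab Hx Hr. unfold rq, Lq in *.
  assert (Ea : b = a) by lra. subst b.
  assert (Ex : x = a) by lra. subst x.
  assert (EL : (a + a) / 2 = a) by field. rewrite EL.
  assert (Er : (a - a) / 6 = 0) by field.
  split; [auto|]. split.
  - apply fibre_iff. rewrite EL, Er. unfold FB, Cf, Cz, mkpl. repeat split;
      apply dist2_eq; try lra; unfold sqd; cbn [fst snd]; ring.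
  - intros p Hp. apply fibre_iff in Hp. rewrite EL, Er in Hp.
    destruct Hp as [(D12 & D23 & D34 & D45) D15].
    apply dist2_zero in D23, D34, D45.
    assert (HA : forall A e, giso A e A = (0,0)) by (intros; unfold giso; f_equal; ring).
    destruct (Req_dec a 0) as [Z|NZ].
    + rewrite Z in D12 |- *. apply dist2_zero in D12.
      exists (giso (p 1%nat) (1,0)). split; [apply giso_iso; cbn; ring|].
      intros i Hi. simpl in Hi. destruct i as [|[|[|[|[|[|i]]]]]]; try lia; cbn [Cz mkpl].
      * rewrite HA; auto.
      * rewrite <- D12, HA; auto.
      * rewrite <- D23, <- D12, HA; auto.
      * rewrite <- D34, <- D23, <- D12, HA; auto.
      * rewrite <- D45, <- D34, <- D23, <- D12, HA; auto.
    + assert (S12 : sqd (p 1%nat) (p 2%nat) = a ^ 2) by (apply dist2_sq; auto).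
      set (ev := ((fst (p 2%nat) - fst (p 1%nat)) / a, (snd (p 2%nat) - snd (p 1%nat)) / a)).
      assert (Ue : fst ev ^ 2 + snd ev ^ 2 = 1).
      { unfold ev; cbn [fst snd]. unfold sqd in S12.
        transitivity (((fst (p 1%nat) - fst (p 2%nat)) ^ 2 + (snd (p 1%nat) - snd (p 2%nat)) ^ 2) / a ^ 2); [field; auto|].
        rewrite S12; field; auto. }
      assert (G2 : giso (p 1%nat) ev (p 2%nat) = (a, 0)).
      { unfold giso, ev; cbn [fst snd]. unfold sqd in S12. f_equal.
        - transitivity (((fst (p 1%nat) - fst (p 2%nat)) ^ 2 + (snd (p 1%nat) - snd (p 2%nat)) ^ 2) / a); [field; auto|].
          rewrite S12; field; auto.
        - field; auto. }
      exists (giso (p 1%nat) ev). split; [apply giso_iso; auto|].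
      intros i Hi. simpl in Hi. destruct i as [|[|[|[|[|[|i]]]]]]; try lia; cbn [Cz mkpl].
      * rewrite HA; auto.
      * rewrite G2; auto.
      * rewrite <- D23, G2; auto.
      * rewrite <- D34, <- D23, G2; auto.
      * rewrite <- D45, <- D34, <- D23, G2; auto.
Qed.

Theorem mainTheorem13 (a b : R) (ha : 0 <= a) (hab : a <= b) :
  (forall x : R, range (linkQ a b) x <-> a <= x <= b) /\
  (forall x : R, nabla (linkQ a b) x <-> a <= x <= b).
Proof.
  assert (Hab : 0 <= a <= b) by lra.
  assert (Hrange : forall x, range (linkQ a b) x <-> a <= x <= b).
  { intros x. split.
    - intros [p [Hc Ht]]. eapply range_bounds; eauto.
    - intros Hx. destruct (Req_dec (rq a b) 0) as [Z|NZ].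
      + destruct (r0_case a b x Hab Hx Z) as (_ & [Hc Ht] & _). exists (Cz (Lq a b)); auto.
      + assert (0 < rq a b) by (unfold rq in *; lra).
        destruct (K_fib a b x 1 Hab Hx H) as [Hc Ht]; [left; auto|].
        exists (CAhy a b x 1 0 0); auto. }
  split; auto.
  intros x. split.
  - intros [Hr _]. apply Hrange; auto.
  - intros Hx. split; [apply Hrange; auto|].
    destruct (Req_dec (rq a b) 0) as [Z|NZ].
    + destruct (r0_case a b x Hab Hx Z) as (_ & Hc & He).
      apply (connected_of_link _ _ (Cz (Lq a b))). intros p Hp.
      apply link_equiv; auto. apply fib_config.
    + assert (0 < rq a b) by (unfold rq in *; lra).
      apply (connected_of_link _ _ (CAhy a b x 1 0 0)). intros p Hp.
      apply main_link; auto.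
Qed.
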